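(* Consider the delayed online learning protocol of the context. Assume the maximum delay is bounded by $\tau$ (i.e. $\{1,\dots,t-\tau-1\}\subset\mathcal S_t$ for all $t$), that $\|g_t\|_*\le G$ for all $t$, and that whenever $s\in\mathcal S_t$ one has $|\mathcal S_s|<|\mathcal S_t|$. Let DDA be run with \[\eta_t=\frac{r}{G\sqrt{(1+2\tau)(|\mathcal S_t|+\tau+1)}}.\] Then for every $p\in\mathcal X$ with $h(p)\le r^2$, \[R_T(p)\le 2rG\sqrt{(T+\tau)(1+2\tau)}.\]
   Context: Let $\mathcal V$ be a finite-dimensional real vector space with norm $\|\cdot\|$ and dual norm $\|\cdot\|_*$, and $\mathcal X\subset\mathcal V$ closed convex. A regularizer $h:\mathcal V\to\mathbb R\cup\{+\infty\}$ is lower semicontinuous, $1$-strongly convex w.r.t. $\|\cdot\|$ on $\mathcal X$, with $\mathcal X\subset\operatorname{dom}h$, whose subdifferential admits a continuous selection, and $h\ge0$. Protocol: at each round $t=1,\dots,T$ one agent $i(t)$ (among possibly many) is active, plays $x_t\in\mathcal X$, incurs $f_t(x_t)$ ($f_t$ convex, $\mathcal X\subset\operatorname{dom}\partial f_t$); a subgradient $g_t\in\partial f_t(x_t)$ is revealed later. $\mathcal S^i_t\subset\{1,\dots,t-1\}$: timestamps of subgradients available to (used by) agent $i$ at time $t$, nondecreasing in $t$; $\mathcal S_t=\mathcal S^{i(t)}_t$. DDA: $x_t=\arg\min_{x\in\mathcal X}\{\sum_{s\in\mathcal S_t}\langle g_s,x\rangle+h(x)/\eta_t\}$. Regret: $R_T(p)=\sum_tf_t(x_t)-\sum_tf_t(p)$.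 *)

(* Defs.v *)
From HB Require Import structures.
From mathcomp Require Import all_boot all_order all_algebra.
From mathcomp Require Import all_classical all_reals all_analysis.
Set Implicit Arguments. Unset Strict Implicit. Unset Printing Implicit Defensive.
Import Order.TTheory GRing.Theory Num.Theory.
Import numFieldNormedType.Exports.
Local Open Scope classical_set_scope.
Local Open Scope ring_scope.

(* The finite-dimensional real vector space V is 'rV[R]_n; its dual is
   identified with V through the standard pairing <g, x>. *)
Definition dot (R : realType) (n : nat) (g x : 'rV[R]_n) : R :=
  \sum_(i < n) g 0 i * x 0 i.

Definition is_norm (R : realType) (n : nat) (N : 'rV[R]_n -> R) : Prop :=
  [/\ forall x, N x = 0 -> x = 0,
      forall (a : R) x, N (a *: x) = `|a| * N x
    & forall x y, N (x + y) <= N x + N y].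

Definition dual_norm (R : realType) (n : nat) (N : 'rV[R]_n -> R)
  (g : 'rV[R]_n) : R := sup [set dot g x | x in [set x | N x <= 1]].

Definition dom (R : realType) (n : nat) (f : 'rV[R]_n -> \bar R) : set 'rV[R]_n :=
  [set x | f x \is a fin_num].

Definition subgrad (R : realType) (n : nat) (f : 'rV[R]_n -> \bar R)
  (x g : 'rV[R]_n) : Prop :=
  f x \is a fin_num /\ forall y, ((fine (f x) + dot g (y - x))%:E <= f y)%E.

Definition dom_subdiff (R : realType) (n : nat) (f : 'rV[R]_n -> \bar R)
  : set 'rV[R]_n := [set x | exists g, subgrad f x g].

Definition convex_ext (R : realType) (n : nat) (f : 'rV[R]_n -> \bar R) : Prop :=
  (forall x, f x != -oo%E) /\
  forall (x y : 'rV[R]_n) (l : R), 0 < l < 1 ->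
    (f (l *: x + (1 - l) *: y)%R <= l%:E * f x + (1 - l)%R%:E * f y)%E.

Definition strongly_convex_on (R : realType) (n : nat) (N : 'rV[R]_n -> R)
  (X : set 'rV[R]_n) (h : 'rV[R]_n -> \bar R) : Prop :=
  forall (x y : 'rV[R]_n) (l : R), X x -> X y -> 0 < l < 1 ->
    (h (l *: x + (1 - l) *: y)%R + (l * (1 - l) / 2 * N (x - y) ^+ 2)%:E
       <= l%:E * h x + (1 - l)%R%:E * h y)%E.

Definition subdiff_cont_selection (R : realType) (n : nat)
  (h : 'rV[R]_n -> \bar R) : Prop :=
  exists sel : 'rV[R]_n -> 'rV[R]_n,
    (forall x, dom_subdiff h x -> subgrad h x (sel x)) /\
    {within dom_subdiff h, continuous sel}.

Definition cardS (S : pred nat) (t : nat) : nat := count S (iota 1 t.-1).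

Definition sum_avail (R : realType) (n : nat) (S : pred nat) (t : nat)
  (g : nat -> 'rV[R]_n) : 'rV[R]_n := \sum_(1 <= s < t | S s) g s.

Definition dda_obj (R : realType) (n : nat) (G : 'rV[R]_n) (eta : R)
  (h : 'rV[R]_n -> \bar R) (x : 'rV[R]_n) : \bar R :=
  ((dot G x)%:E + (eta^-1)%:E * h x)%E.

Definition is_argmin (R : realType) (n : nat) (X : set 'rV[R]_n)
  (F : 'rV[R]_n -> \bar R) (x : 'rV[R]_n) : Prop :=
  X x /\ forall y, X y -> (F x <= F y)%E.

Definition regret (R : realType) (n : nat) (f : nat -> 'rV[R]_n -> \bar R)
  (x : nat -> 'rV[R]_n) (T : nat) (p : 'rV[R]_n) : R :=
  \sum_(1 <= t < T.+1) (fine (f t (x t)) - fine (f t p)).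

(* Main.v *)
Require Import Defs.
From HB Require Import structures.
From mathcomp Require Import all_boot all_order all_algebra.
From mathcomp Require Import all_classical all_reals all_analysis.
From mathcomp Require Import ring lra zify.
Import Order.TTheory GRing.Theory Num.Theory.
Import numFieldNormedType.Exports.
Local Open Scope classical_set_scope.
Local Open Scope ring_scope.

Section Basics.
Variables (R : realType) (n : nat).
Implicit Types (x y g : 'rV[R]_n).

Lemma dotDr g x y : dot g (x + y) = dot g x + dot g y.
Proof. by rewrite /dot -big_split /=; apply: eq_bigr => i _; rewrite mxE mulrDr. Qed.
Lemma dotZr g a x : dot g (a *: x) = a * dot g x.
Proof. by rewrite /dot mulr_sumr; apply: eq_bigr => i _; rewrite mxE mulrCA. Qed.
Lemma dotNr g x : dot g (- x) = - dot g x.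
Proof. by rewrite /dot -sumrN; apply: eq_bigr => i _; rewrite mxE mulrN. Qed.
Lemma dotBr g x y : dot g (x - y) = dot g x - dot g y.
Proof. by rewrite dotDr dotNr. Qed.
Lemma dotDl g g' x : dot (g + g') x = dot g x + dot g' x.
Proof. by rewrite /dot -big_split /=; apply: eq_bigr => i _; rewrite mxE mulrDl. Qed.
Lemma dotNl g x : dot (- g) x = - dot g x.
Proof. by rewrite /dot -sumrN; apply: eq_bigr => i _; rewrite mxE mulNr. Qed.
Lemma dotBl g g' x : dot (g - g') x = dot g x - dot g' x.
Proof. by rewrite dotDl dotNl. Qed.
Lemma dot0r g : dot g 0 = 0.
Proof. by rewrite /dot big1 // => i _; rewrite mxE mulr0. Qed.
Lemma dot_suml (I : Type) (r : seq I) (P : pred I) (F : I -> 'rV[R]_n) x :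
  dot (\sum_(i <- r | P i) F i) x = \sum_(i <- r | P i) dot (F i) x.
Proof.
rewrite /dot; under eq_bigr do rewrite summxE big_distrl /=.
exact: exchange_big.
Qed.

Variable N : 'rV[R]_n -> R.
Hypothesis hN : is_norm N.

Lemma N0 : N 0 = 0.
Proof. by case: hN => _ hZ _; rewrite -(scale0r (0 : 'rV[R]_n)) hZ normr0 mul0r. Qed.
Lemma NN x : N (- x) = N x.
Proof. by case: hN => _ hZ _; rewrite -scaleN1r hZ normrN normr1 mul1r. Qed.
Lemma N_ge0 x : 0 <= N x.
Proof.
case: hN => _ _ hD; have := hD x (- x); rewrite subrr N0 NN => h.
by rewrite -(@pmulr_rge0 _ 2) // mulr2n mulrDl mul1r.
Qed.
Lemma NB x y : N (x - y) = N (y - x).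
Proof. by rewrite -NN opprB. Qed.
End Basics.

Section Equiv.
Variables (R : realType) (n : nat) (N : 'rV[R]_n -> R).
Hypothesis hN : is_norm N.

Lemma coord_le_norm (x : 'rV[R]_n) i : `|x 0 i| <= `|x|.
Proof.
have /mapP[j Hj ->] : `|x 0 i| \in [seq `|x k.1 k.2| | k : 'I_1 * 'I_n].
  by apply/mapP; exists (0, i) => //=; rewrite mem_enum.
by rewrite [leRHS]/Num.Def.normr /= mx_normrE; apply/bigmax_geP; right => /=; exists j.
Qed.

Lemma N_sum (I : Type) (r : seq I) (P : pred I) (F : I -> 'rV[R]_n) :
  N (\sum_(i <- r | P i) F i) <= \sum_(i <- r | P i) N (F i).
Proof.
case: hN => _ _ hD.
elim/big_rec2: _ => [|i y1 y2 _ IH]; first by rewrite N0.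
apply: le_trans; first exact: hD.
by rewrite lerD2l.
Qed.

Lemma N_lip_bound : exists2 C, 0 <= C & forall x, N x <= C * `|x|.
Proof.
case: hN => _ hZ hD.
exists (\sum_(i < n) N (delta_mx 0 i)).
  by apply: sumr_ge0 => i _; apply: N_ge0.
move=> x; rewrite {1}(row_sum_delta x) mulr_suml.
apply: le_trans; first exact: N_sum. apply: ler_sum => i _.
rewrite hZ mulrC ler_wpM2l //; first exact: N_ge0.
exact: coord_le_norm.
Qed.

Lemma N_continuous : continuous N.
Proof.
case: N_lip_bound => C C0 HC x.
apply/(@cvgrPdist_lt _ _ _ (nbhs x) _ N (N x)) => e e0.
have C1 : 0 < C + 1 by lra.
apply/nbhs_ballP; exists (e/(C+1)); first by apply: divr_gt0.
move=> y; rewrite -ball_normE /= => hy.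
have h1 : `|N x - N y| <= N (x - y).
  case: hN => _ _ hD.
  rewrite ler_norml; apply/andP; split.
    have := hD (y - x) x; rewrite subrK NB //; lra.
  have := hD (x - y) y; rewrite subrK; lra.
apply: le_lt_trans h1 _; apply: le_lt_trans (HC _) _.
have hn : 0 <= `|x - y| by [].
have : C * `|x - y| <= (C + 1) * `|x - y| by rewrite ler_wpM2r // lerDl.
move=> h2; apply: le_lt_trans h2 _.
by rewrite -ltr_pdivlMl // mulrC.
Qed.

Lemma norm_equiv : exists2 c, 0 < c & forall x, c * `|x| <= N x.
Proof.
have [[x0 x00]|] := pselect (exists x0 : 'rV[R]_n, x0 != 0); last first.
  move=> hno; exists 1 => // x.
  have -> : x = 0 by apply/eqP; apply: contrapT => hx; apply: hno; exists x; apply/negP.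
  by rewrite normr0 mulr0 N0.
pose A := [set x : 'rV[R]_n | `|x| = 1].
have A0 : A !=set0.
  exists (`|x0|^-1 *: x0); rewrite /A /= normrZ ger0_norm ?invr_ge0 //.
  by rewrite mulVf // normr_eq0.
have Acl : closed A.
  have : closed ((@Num.Def.normr R 'rV[R]_n) @^-1` [set (1:R)]).
    apply: preimage_closed; last exact: closed_eq.
    by move=> ? _; exact: norm_continuous.
  by [].
have Abd : bounded_set A.
  exists 1; split => // M M1 x /= ->; exact: ltW.
have Acp : compact A by exact: bounded_closed_compact.
have [c cA cmin] := EVT_min_rV A0 Acp (continuous_subspaceT N_continuous).
have cA' : `|c| = 1 by move: cA; rewrite inE.
have Nc0 : 0 < N c.
  rewrite lt_neqAle N_ge0 // andbT; apply/eqP => h.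
  case: hN => h0 _ _; have := h0 c (esym h) => c0.
  by move: cA'; rewrite c0 normr0 => /eqP; rewrite eq_sym oner_eq0.
exists (N c) => // x.
have [->|x0'] := eqVneq x 0; first by rewrite normr0 mulr0 N0.
have nx : 0 < `|x| by rewrite normr_gt0.
have uA : (`|x|^-1 *: x) \in A.
  rewrite inE /A /= normrZ ger0_norm ?invr_ge0 ?(ltW nx) //.
  by rewrite mulVf // gt_eqF.
have := cmin _ uA; case: hN => _ hZ _; rewrite hZ ger0_norm ?invr_ge0 ?(ltW nx) //.
by rewrite ler_pdivlMl // mulrC.
Qed.

Lemma dual_le (g v : 'rV[R]_n) : dot g v <= dual_norm N g * N v.
Proof.
have [c c0 hc] := norm_equiv.
pose E := [set dot g x | x in [set x | N x <= 1]].
have hsup : has_sup E.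
  split; first by exists (dot g 0), 0 => //=; rewrite N0.
  exists ((\sum_(i < n) `|g 0 i|) / c) => _ [x /= Nx1 <-].
  rewrite /dot; apply: le_trans; first exact: ler_norm.
  apply: le_trans; first exact: ler_norm_sum.
  have : \sum_(i < n) `|g 0 i * x 0 i| <= (\sum_(i < n) `|g 0 i|) * `|x|.
    rewrite mulr_suml; apply: ler_sum => i _; rewrite normrM ler_wpM2l //.
    exact: coord_le_norm.
  move=> h; apply: le_trans h _; rewrite ler_pdivlMr //.
  rewrite -mulrA -[leRHS]mulr1 ler_wpM2l //; first by apply: sumr_ge0.
  by rewrite mulrC; apply: le_trans (hc x) Nx1.
have [N0v|Nv0] := eqVneq (N v) 0.
  by case: hN => h0 _ _; rewrite (h0 _ N0v) dot0r (@N0 _ _ _ hN) mulr0.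
have Nvp : 0 < N v by rewrite lt_neqAle eq_sym Nv0 N_ge0.
have : E (dot g ((N v)^-1 *: v)).
  exists ((N v)^-1 *: v) => //=; case: hN => _ hZ _.
  by rewrite hZ ger0_norm ?invr_ge0 ?N_ge0 // mulVf.
move=> /(sup_upper_bound hsup); rewrite dotZr.
by rewrite mulrC ler_pdivrMr // mulrC.
Qed.

Lemma dual_le' (g v : 'rV[R]_n) (G : R) : dual_norm N g <= G -> dot g v <= G * N v.
Proof. move=> h; apply: le_trans (dual_le g v) _; rewrite ler_wpM2r //; exact: N_ge0. Qed.

End Equiv.

Lemma lim_l (R : realType) (Dl D : R) : 0 <= D ->
  (forall l, 0 < l < 1 -> (1 - l) * D <= Dl) -> D <= Dl.
Proof.
move=> D0 H.
have h2 : D / 2 <= Dl.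
  have := H (1/2) ltac:(by apply/andP; split; lra); lra.
rewrite leNgt; apply/negP => hlt.
have Dp : 0 < D by lra.
have := H ((D - Dl) / (2 * D)).
have l0 : 0 < (D - Dl) / (2 * D) by apply: divr_gt0; lra.
have l1 : (D - Dl) / (2 * D) < 1.
  by rewrite ltr_pdivrMr; lra.
move=> /(_ ltac:(by apply/andP; split)).
have -> : (1 - (D - Dl) / (2 * D)) * D = (D + Dl) / 2.
  by field; rewrite gt_eqF.
lra.
Qed.

Section SC.
Variables (R : realType) (n : nat) (N : 'rV[R]_n -> R).
Hypothesis hN : is_norm N.
Variables (X : set 'rV[R]_n) (h : 'rV[R]_n -> \bar R).
Hypothesis hconv : convex_set X.
Hypothesis hsc : strongly_convex_on N X h.
Hypothesis hdom : X `<=` dom h.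

Definition Hr y := fine (h y).
Definition Fr (a : 'rV[R]_n) (eta : R) y := dot a y + Hr y / eta.

Lemma convX {z w l} : X z -> X w -> 0 <= l -> l <= 1 -> X (l *: z + (1 - l) *: w).
Proof.
move=> Xz Xw l0 l1.
exact: (set_mem (hconv z w (Itv01 l0 l1) (mem_set Xz) (mem_set Xw))).
Qed.

Lemma hE {y} : X y -> h y = (Hr y)%:E.
Proof. by move=> /hdom hy; rewrite /Hr fineK. Qed.

Lemma sc_real {z w l} : X z -> X w -> 0 < l < 1 ->
  Hr (l *: z + (1 - l) *: w) + l * (1 - l) / 2 * N (z - w) ^+ 2
    <= l * Hr z + (1 - l) * Hr w.
Proof.
move=> Xz Xw /andP[l0 l1].
have Xy := convX Xz Xw (ltW l0) (ltW l1).
have := hsc z w l Xz Xw ltac:(by apply/andP).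
by rewrite (hE Xz) (hE Xw) (hE Xy) -EFinD -!EFinM -EFinD lee_fin.
Qed.

Lemma Fr_sc a {eta z w l} : 0 < eta -> X z -> X w -> 0 < l < 1 ->
  Fr a eta (l *: z + (1 - l) *: w)
    <= l * Fr a eta z + (1 - l) * Fr a eta w - l * (1 - l) * (N (z - w) ^+ 2 / (2 * eta)).
Proof.
move=> e0 Xz Xw hl.
have := sc_real Xz Xw hl.
rewrite /Fr dotDr !dotZr => H.
have : Hr (l *: z + (1 - l) *: w) / eta <=
   (l * Hr z + (1 - l) * Hr w - l * (1 - l) / 2 * N (z - w) ^+ 2) / eta.
  by rewrite ler_pM2r ?invr_gt0 //; lra.
move=> H2.
have E : (l * Hr z + (1 - l) * Hr w - l * (1 - l) / 2 * N (z - w) ^+ 2) / eta =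
  l * (Hr z / eta) + (1 - l) * (Hr w / eta) - l * (1 - l) * (N (z - w) ^+ 2 / (2 * eta)).
  by field; rewrite gt_eqF.
rewrite E in H2.
lra.
Qed.

Lemma min_sc a {eta xm z} : 0 < eta -> X xm -> X z ->
  (forall y, X y -> Fr a eta xm <= Fr a eta y) ->
  N (z - xm) ^+ 2 / (2 * eta) <= Fr a eta z - Fr a eta xm.
Proof.
move=> e0 Xm Xz hmin.
apply: lim_l.
  by apply: divr_ge0; [apply: exprn_ge0; exact: N_ge0 | lra].
move=> l hl.
have := Fr_sc a e0 Xz Xm hl.
have /andP[l0 l1] := hl.
have := hmin _ (convX Xz Xm (ltW l0) (ltW l1)).
set D := N (z - xm) ^+ 2 / (2 * eta).
set Fz := Fr a eta z; set Fm := Fr a eta xm.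
move=> H1 H2.
have : l * ((1 - l) * D) <= l * (Fz - Fm) by lra.
by rewrite ler_pM2l.
Qed.

End SC.

Section Step.
Variables (R : realType) (n : nat) (N : 'rV[R]_n -> R).
Hypothesis hN : is_norm N.
Variables (X : set 'rV[R]_n) (h : 'rV[R]_n -> \bar R).
Hypothesis hconv : convex_set X.
Hypothesis hsc : strongly_convex_on N X h.
Hypothesis hdom : X `<=` dom h.
Local Notation FF := (Fr R n h).

Lemma step a E gj eta G m xm x :
  0 < eta -> 0 < G -> 0 <= m -> X xm ->
  (forall y, X y -> FF a eta xm <= FF a eta y) ->
  (forall v, - (G * N v) <= dot gj v) ->
  (forall v, - (G * m * N v) <= dot E v) -> X x ->
  exists2 y, X y &
    FF (a + E) eta y + dot gj xm - eta * G ^+ 2 * (1/2 + m) <= FF (a + E + gj) eta x.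
Proof.
move=> e0 G0 m0 Xm hmin hg hEv Xx.
set d := N (x - xm).
have d0 : 0 <= d by exact: (@N_ge0 R n N hN).
have hu := @min_sc R n N hN X h hconv hsc hdom a _ _ _ e0 Xm Xx hmin.
rewrite -/d in hu.
set D := d ^+ 2 / (2 * eta) in hu.
have hE1 := hEv (x - xm); rewrite dotBr -/d in hE1.
have hg1 := hg (x - xm); rewrite dotBr -/d in hg1.
have FE : forall b c y, FF (b + c) eta y = FF b eta y + dot c y.
  by move=> b c y; rewrite /Fr dotDl; lra.
rewrite !FE.
set Fx := FF a eta x in hu *; set Fm := FF a eta xm in hu *.
case: (leP d (eta * G)) => hd.
  exists xm => //; rewrite FE -/Fm.
  have k1 : D - G * d + eta * G ^+ 2 / 2 = (d - eta * G) ^+ 2 / (2 * eta).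
    by rewrite /D; field; rewrite gt_eqF.
  have k2 : 0 <= (d - eta * G) ^+ 2 / (2 * eta).
    by apply: divr_ge0; [apply: sqr_ge0 | lra].
  have k3 : 0 <= G * m * (eta * G - d).
    by apply: mulr_ge0; [apply: mulr_ge0; lra | lra].
  lra.
have dp : 0 < d by have := mulr_gt0 e0 G0; lra.
set mu := eta * G / d.
have mu0 : 0 < mu by apply: divr_gt0 => //; apply: mulr_gt0.
have mu1 : mu < 1 by rewrite ltr_pdivrMr // mul1r.
have Xy : X ((1 - mu) *: x + (1 - (1 - mu)) *: xm).
  by apply: (@convX R n X hconv) => //; lra.
exists ((1 - mu) *: x + (1 - (1 - mu)) *: xm) => //.
have hl : 0 < 1 - mu < 1 by apply/andP; split; lra.
have hF := @Fr_sc R n N X h hconv hsc hdom a _ _ _ _ e0 Xx Xm hl.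
rewrite -/d -/Fx -/Fm in hF.
rewrite -/D in hF.
rewrite FE dotDr !dotZr.
have A1 : mu * D <= mu * (Fx - Fm) by rewrite ler_pM2l.
have A2 : mu * (- (G * m * d)) <= mu * (dot E x - dot E xm) by rewrite ler_pM2l.
have A2' : mu * (G * m * d) = eta * G ^+ 2 * m by rewrite /mu; field; rewrite gt_eqF.
have A4 : mu * D + (1 - mu) * mu * D = G * d - eta * G ^+ 2 / 2.
  by rewrite /mu /D; field; rewrite !gt_eqF.
rewrite -/D in A1 A4.
lra.
Qed.

End Step.

Lemma dot0l (R : realType) n (y : 'rV[R]_n) : dot 0 y = 0.
Proof. by rewrite /dot big1 // => i _; rewrite mxE mul0r. Qed.

Lemma sum_lb (R : realType) (T : eqType) (r : seq T) (P : pred T) (b : T -> R) a :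
  (forall i, i \in r -> P i -> - a <= b i) ->
  - (a * (count P r)%:R) <= \sum_(i <- r | P i) b i.
Proof.
elim: r => [|i r IH] H; first by rewrite big_nil mulr0 oppr0.
rewrite big_cons /=.
have IH' := IH (fun j hj => H j ltac:(by rewrite inE hj orbT)).
case hP: (P i) => /=.
  have := H i (mem_head _ _) hP; rewrite -addn1 natrD; lra.
by rewrite add0n.
Qed.

Lemma sum_inv_sqrt (R : realType) (T : nat) :
  \sum_(1 <= s < T.+1) (2 * Num.sqrt (s%:R : R))^-1 <= Num.sqrt (T%:R).
Proof.
elim: T => [|T IH]; first by rewrite big_geq // sqrtr0.
rewrite big_nat_recr /=; last by [].
set a := Num.sqrt (T%:R : R); set b := Num.sqrt (T.+1%:R : R).
have a0 : 0 <= a by exact: sqrtr_ge0.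
have b0 : 0 < b by rewrite sqrtr_gt0 ltr0n.
have ab : a <= b by rewrite ler_sqrt // ler_nat.
have a2 : a ^+ 2 = T%:R by rewrite sqr_sqrtr.
have b2 : b ^+ 2 = T%:R + 1 by rewrite sqr_sqrtr // -addn1 natrD.
have : (2 * b)^-1 <= b - a.
  rewrite -[leLHS]mul1r ler_pdivrMr; last by apply: mulr_gt0.
  nra.
move=> hh; move: IH; rewrite -/a; lra.
Qed.

Lemma count_iota_le (P : pred nat) K a L :
  (forall s, (a <= s < a + L)%N -> P s -> (s <= K)%N) -> (count P (iota a L) <= K.+1 - a)%N.
Proof.
elim: L a => [|L IH] a H /=; first by [].
have := IH a.+1 (fun s hs => H s ltac:(lia)).
case hPa: (P a) => /=; last lia.
have := H a ltac:(lia) hPa; lia.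
Qed.

Theorem proposition4 (R : realType) (n : nat) (N : 'rV[R]_n -> R)
  (X : set 'rV[R]_n) (h : 'rV[R]_n -> \bar R)
  (I : Type) (agent : nat -> I) (Sa : I -> nat -> pred nat)
  (f : nat -> 'rV[R]_n -> \bar R) (x g : nat -> 'rV[R]_n)
  (T tau : nat) (G r : R) (p : 'rV[R]_n) :
  is_norm N ->
  closed X -> convex_set X ->
  lower_semicontinuous h ->
  strongly_convex_on N X h ->
  X `<=` dom h ->
  subdiff_cont_selection h ->
  (forall y, (0 <= h y)%E) ->
  (* protocol: timestamps available to agent i at time t *)
  (forall i t s, Sa i t s -> (0 < s < t)%N) ->
  (forall i t t' s, (t <= t')%N -> Sa i t s -> Sa i t' s) ->
  let S t := Sa (agent t) t in
  (forall t, (1 <= t <= T)%N -> convex_ext (f t)) ->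
  (forall t, (1 <= t <= T)%N -> X `<=` dom_subdiff (f t)) ->
  (forall t, (1 <= t <= T)%N -> subgrad (f t) (x t) (g t)) ->
  (* bounded delay *)
  (forall t s, (1 <= t <= T)%N -> (1 <= s)%N -> (s <= t - tau - 1)%N -> S t s) ->
  (* bounded subgradients *)
  (forall t, (1 <= t <= T)%N -> dual_norm N (g t) <= G) ->
  (forall t s, (1 <= t <= T)%N -> S t s -> (cardS (S s) s < cardS (S t) t)%N) ->
  0 < r -> 0 < G ->
  let eta t := r / (G * Num.sqrt ((1 + 2 * tau)%:R * (cardS (S t) t + tau + 1)%:R)) in
  (* DDA *)
  (forall t, (1 <= t <= T)%N ->
     is_argmin X (dda_obj (sum_avail (S t) t g) (eta t) h) (x t)) ->
  X p -> (h p <= (r ^+ 2)%:E)%E ->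
  regret f x T p <= 2 * r * G * Num.sqrt ((T + tau)%:R * (1 + 2 * tau)%:R).
Proof.
move=> hN hcl hconv hlsc hsc hdom hsel hh0 hprot hmono S hcvx hdomf hsub
  hdelay hG hcard r0 G0 eta hdda Xp hp.
pose k t := cardS (S t) t.
have F1 : forall t, (k t <= t.-1)%N.
  by move=> t; rewrite /k /cardS; apply: leq_trans (count_size _ _) _; rewrite size_iota.
have F2 : forall t, (1 <= t <= T)%N -> (t - tau - 1 <= k t)%N.
  move=> t ht; rewrite /k /cardS.
  have -> : t.-1 = ((t - tau - 1) + (t.-1 - (t - tau - 1)))%N by lia.
  rewrite iotaD count_cat.
  have -> : count (S t) (iota 1 (t - tau - 1)) = (t - tau - 1)%N.
    rewrite (@eq_in_count _ _ predT) ?count_predT ?size_iota // => s.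
    rewrite mem_iota => /andP[h1 h2]; apply: hdelay => //; lia.
  lia.
pose kap t := (k t * T.+1 + t)%N.
have K1 : forall s t, (1 <= s <= T)%N -> (1 <= t <= T)%N -> (k t < k s)%N -> (kap t < kap s)%N.
  move=> s t hs ht hk.
  have : ((k t).+1 * T.+1 <= k s * T.+1)%N by rewrite leq_mul2r hk orbT.
  rewrite /kap; lia.
have K2 : forall s t, (1 <= s <= T)%N -> (1 <= t <= T)%N -> (kap s < kap t)%N -> (k s <= k t)%N.
  move=> s t hs ht hk; rewrite leqNgt; apply/negP => /(K1 _ _ hs ht); lia.
have K3 : forall s t, (1 <= s <= T)%N -> (1 <= t <= T)%N -> kap s = kap t -> s = t.
  move=> s t hs ht hk.
  have [hst|hst|hst] := ltngtP (k s) (k t).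
  - by have := K1 _ _ ht hs hst; lia.
  - by have := K1 _ _ hs ht hst; lia.
  - by move: hk; rewrite /kap hst; lia.
have F6 : forall j, (1 <= j <= T)%N ->
    (count (fun s => (kap s < kap j)%N && ~~ S j s) (iota 1 T) <= tau)%N.
  move=> j hj.
  have -> : T = ((j - 1) + (1 + (T - j)))%N by lia.
  rewrite iotaD iotaD count_cat count_cat.
  have c0 : count (fun s => (kap s < kap j)%N && ~~ S j s) (iota (1 + (j - 1)) 1) = 0%N.
    by rewrite /= (_ : (1 + (j - 1))%N = j) ?ltnn //; lia.
  have c1 : (count (fun s => (kap s < kap j)%N && ~~ S j s) (iota 1 (j - 1))
             <= j.-1 - k j)%N.
    have := count_predC (S j) (iota 1 j.-1); rewrite size_iota.
    have -> : (j - 1 = j.-1)%N by lia.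
    have : (count (fun s => (kap s < kap j)%N && ~~ S j s) (iota 1 j.-1)
            <= count (predC (S j)) (iota 1 j.-1))%N.
      by apply: sub_count => s /= /andP[].
    rewrite /k /cardS; lia.
  have c2 : (count (fun s => (kap s < kap j)%N && ~~ S j s) (iota (1 + (j - 1) + 1) (T - j))
             <= (k j + tau).+1 - (1 + (j - 1) + 1))%N.
    apply: count_iota_le => s hs /andP[hks _].
    have hs' : (1 <= s <= T)%N by lia.
    have := K2 _ _ hs' hj hks.
    rewrite leq_eqVlt => /orP[/eqP hkk|hkk].
      by move: hks; rewrite /kap hkk; lia.
    have := F2 _ hs'; lia.
  have := F1 j; have := F2 _ hj; lia.
have [T0|Tn0] := eqVneq T 0%N.
  rewrite /regret T0 big_geq //.
  have := Num.Theory.sqrtr_ge0 ((0 + tau)%:R * (1 + 2 * tau)%:R : R).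
  have := mulr_gt0 r0 G0; nra.
have hT : (1 <= T)%N by lia.
have hEq : forall y, X y -> h y = (Hr R n h y)%:E := fun y Xy => @hE R n X h hdom y Xy.
have hHr0 : forall y, 0 <= Hr R n h y.
  by move=> y; rewrite /Hr; apply: fine_ge0; exact: hh0.
have eta0 : forall t, 0 < eta t.
  move=> t; rewrite /eta; apply: divr_gt0 => //; apply: mulr_gt0 => //.
have etaM : forall s t, (k s <= k t)%N -> eta t <= eta s.
  move=> s t hst; rewrite /eta ler_pM2l // lef_pV2 ?posrE; first last.
  - apply: mulr_gt0 => //; rewrite sqrtr_gt0; apply: mulr_gt0; rewrite ltr0n; lia.
  - apply: mulr_gt0 => //; rewrite sqrtr_gt0; apply: mulr_gt0; rewrite ltr0n; lia.
  rewrite ler_pM2l // ler_sqrt; last by apply: mulr_ge0; rewrite ler0n.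
  by rewrite ler_pM2l ?ltr0n ?ler_nat; rewrite /k in hst; lia.
have hmin : forall t, (1 <= t <= T)%N -> X (x t) /\
    forall y, X y -> Fr R n h (sum_avail (S t) t g) (eta t) (x t) <=
                     Fr R n h (sum_avail (S t) t g) (eta t) y.
  move=> t ht; have [Xt hm] := hdda t ht; split => // y Xy.
  have := hm y Xy; rewrite /dda_obj (hEq _ Xt) (hEq _ Xy) -!EFinM -!EFinD lee_fin /Fr.
  by rewrite !(mulrC (eta t)^-1).
have gb : forall s, (1 <= s <= T)%N -> forall v, - (G * N v) <= dot (g s) v.
  move=> s hs v; have := @dual_le' R n N hN (g s) (- v) G (hG s hs).
  rewrite dotNr (@NN R n N hN); lra.
pose U m := \sum_(1 <= s < T.+1 | (kap s < m)%N) g s.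
pose cc s := eta s * G ^+ 2 * (1/2 + tau%:R).
pose C m := \sum_(1 <= s < T.+1 | (kap s < m)%N) (dot (g s) (x s) - cc s).
have F7 : forall j, (1 <= j <= T)%N -> U (kap j) =
    sum_avail (S j) j g + \sum_(1 <= s < T.+1 | (kap s < kap j)%N && ~~ S j s) g s.
  move=> j hj; rewrite /U (bigID (S j)) /=; congr (_ + _).
  rewrite /sum_avail (big_nat_widen _ _ _ _ _ (_ : (j <= T.+1)%N)); last lia.
  apply: congr_big_nat => // i hi.
  case hS: (S j i); rewrite ?andbT ?andbF //=.
  have hi2 := hprot _ _ _ hS.
  have hi' : (1 <= i <= T)%N by lia.
  have e1 := K1 _ _ hj hi' (hcard _ _ hj hS).
  have e2 : (i < j)%N by lia.
  by rewrite e1 e2.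
have UC : forall (V : zmodType) (F : nat -> V) j, (1 <= j <= T)%N ->
    \sum_(1 <= s < T.+1 | (kap s < (kap j).+1)%N) F s =
    \sum_(1 <= s < T.+1 | (kap s < kap j)%N) F s + F j.
  move=> V F j hj; rewrite (bigID (fun s => (kap s < kap j)%N)) /=; congr (_ + _).
    apply: eq_bigl => s; apply/idP/idP => [/andP[]//|h0].
    by rewrite h0 andbT ltnS ltnW.
  transitivity (\sum_(1 <= s < T.+1 | s == j) F s).
    apply: congr_big_nat => // s hs.
    have [->|sj] := eqVneq s j; first by rewrite ltnSn ltnn.
    apply/negbTE/negP => /andP[h1 h2].
    have hs' : (1 <= s <= T)%N by lia.
    have : kap s = kap j by lia.
    by move/(K3 _ _ hs' hj)/eqP; rewrite (negbTE sj).
  by rewrite big_nat1_eq ifT //; lia.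
have UC0 : forall (V : zmodType) (F : nat -> V) m,
    ~ (exists2 j, (1 <= j <= T)%N & kap j = m) ->
    \sum_(1 <= s < T.+1 | (kap s < m.+1)%N) F s =
    \sum_(1 <= s < T.+1 | (kap s < m)%N) F s.
  move=> V F m hno; apply: congr_big_nat => // s hs.
  rewrite ltnS leq_eqVlt; case: eqP => //= hsm.
  by exfalso; apply: hno; exists s => //; lia.
have ei : index_iota 1 T.+1 = iota 1 T by rewrite /index_iota subSS subn0.
have hEv : forall j, (1 <= j <= T)%N -> forall v,
    - (G * tau%:R * N v) <= dot (U (kap j) - sum_avail (S j) j g) v.
  move=> j hj v.
  have -> : U (kap j) - sum_avail (S j) j g =
      \sum_(1 <= s < T.+1 | (kap s < kap j)%N && ~~ S j s) g s.
    by rewrite (F7 j hj) addrC addKr.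
  rewrite dot_suml ei.
  apply: le_trans; last first.
    apply: (@sum_lb R nat _ _ _ (G * N v)) => i; rewrite mem_iota => hi _.
    by apply: gb; lia.
  have Nv0 : 0 <= G * N v by apply: mulr_ge0; [lra | exact: (@N_ge0 R n N hN)].
  rewrite lerN2 mulrAC.
  apply: ler_wpM2r; first exact: (@N_ge0 R n N hN).
  by apply: ler_wpM2l; [lra | rewrite ler_nat; exact: F6].
have Q : forall m et, 0 < et ->
    (forall s, (1 <= s <= T)%N -> (kap s < m)%N -> et <= eta s) ->
    forall y, X y -> C m <= Fr R n h (U m) et y.
  elim=> [|m IH] et et0 het y Xy.
    have z : forall (V : zmodType) (F : nat -> V),
        \sum_(1 <= s < T.+1 | (kap s < 0)%N) F s = 0.
      by move=> V F; rewrite big_pred0 // => s; rewrite ltn0.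
    rewrite /C /U !z /Fr dot0l add0r.
    by apply: divr_ge0 => //; exact: ltW.
  case: (pselect (exists2 j, (1 <= j <= T)%N & kap j = m)) => [[j hj hjm]|hno]; last first.
    rewrite /C /U !UC0 //; apply: IH => // s hs hks; apply: het => //; exact: ltnW.
  subst m.
  have US : U (kap j).+1 = U (kap j) + g j := UC _ g j hj.
  have CS : C (kap j).+1 = C (kap j) + (dot (g j) (x j) - cc j) :=
    UC _ (fun s => dot (g s) (x s) - cc s) j hj.
  rewrite US CS.
  have hetj : et <= eta j by apply: het => //; exact: ltnSn.
  have [Xxj hminj] := hmin j hj.
  have [y' Xy' hy'] := @step R n N hN X h hconv hsc hdom (sum_avail (S j) j g)
    (U (kap j) - sum_avail (S j) j g) (g j) (eta j) G tau%:R (x j) y (eta0 j) G0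
    (ler0n _ _) Xxj hminj (gb j hj) (hEv j hj) Xy.
  have eU : sum_avail (S j) j g + (U (kap j) - sum_avail (S j) j g) = U (kap j).
    by rewrite addrC subrK.
  rewrite eU in hy'.
  have IH' := IH (eta j) (eta0 j) (fun s hs hks => etaM s j (K2 s j hs hj hks)) y' Xy'.
  have hmono' : Fr R n h (U (kap j) + g j) (eta j) y <= Fr R n h (U (kap j) + g j) et y.
    rewrite /Fr lerD2l ler_wpM2l //.
    by rewrite lef_pV2 ?posrE.
  rewrite /cc; lra.
pose M := (T * T.+1)%N.
have allM : forall s, (1 <= s <= T)%N -> (kap s < M)%N.
  move=> s hs.
  have e : (T * T.+1 = T.-1 * T.+1 + T.+1)%N by rewrite -{1}(prednK hT) mulSn addnC.
  have : (k s * T.+1 <= T.-1 * T.+1)%N.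
    by rewrite leq_mul2r; apply/orP; right; have := F1 s; lia.
  rewrite /M /kap; lia.
have AM : forall (V : zmodType) (F : nat -> V),
    \sum_(1 <= s < T.+1 | (kap s < M)%N) F s = \sum_(1 <= s < T.+1) F s.
  by move=> V F; apply: congr_big_nat => // s hs; apply: allM; lia.
pose q : R := (1 + 2 * tau)%:R.
pose Q' : R := (T + tau)%:R * q.
have q0 : 0 < q by rewrite ltr0n; lia.
have Q0 : 0 < Q' by apply: mulr_gt0 => //; rewrite ltr0n; lia.
pose ee := r / (G * Num.sqrt Q').
have ee0 : 0 < ee.
  by apply: divr_gt0 => //; apply: mulr_gt0 => //; rewrite sqrtr_gt0.
have eele : forall s, (1 <= s <= T)%N -> ee <= eta s.
  move=> s hs; rewrite /ee /eta ler_pM2l // lef_pV2 ?posrE; first last.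
  - apply: mulr_gt0 => //; rewrite sqrtr_gt0; apply: mulr_gt0; rewrite ltr0n; lia.
  - by apply: mulr_gt0 => //; rewrite sqrtr_gt0.
  rewrite ler_pM2l // ler_sqrt; last exact: ltW.
  rewrite /Q' mulrC ler_pM2r // ler_nat.
  by have := F1 s; rewrite /k; lia.
have main := Q M ee ee0 (fun s hs _ => eele s hs) p Xp.
rewrite /C /U !AM /Fr dot_suml in main.
have hreg : regret f x T p <= \sum_(1 <= t < T.+1) (dot (g t) (x t) - dot (g t) p).
  rewrite /regret; apply: ler_sum_nat => t ht.
  have ht' : (1 <= t <= T)%N by lia.
  have [fx hsg] := hsub t ht'.
  have [g' [fp _]] := hdomf t ht' p Xp.
  have := hsg p; rewrite -(fineK fp) lee_fin dotBr; lra.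
have b1 : Hr R n h p / ee <= r * G * Num.sqrt Q'.
  have hp' : Hr R n h p <= r ^+ 2 by move: hp; rewrite (hEq _ Xp) lee_fin.
  rewrite /ee invf_div.
  have sQ : 0 <= G * Num.sqrt Q' by apply: mulr_ge0; [lra | exact: sqrtr_ge0].
  apply: le_trans (_ : r ^+ 2 * (G * Num.sqrt Q' / r) <= _).
    by apply: ler_wpM2r => //; apply: divr_ge0 => //; lra.
  by rewrite le_eqVlt; apply/orP; left; apply/eqP; field; rewrite gt_eqF.
have b2 : \sum_(1 <= t < T.+1) cc t <= r * G * Num.sqrt Q'.
  pose a := Num.sqrt q.
  have a0 : 0 < a by rewrite sqrtr_gt0.
  have a2 : a ^+ 2 = q by rewrite sqr_sqrtr //; exact: ltW.
  apply: le_trans (_ : \sum_(1 <= t < T.+1) (r * G * a) * (2 * Num.sqrt (t%:R : R))^-1 <= _).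
    apply: ler_sum_nat => t ht.
    have ht' : (1 <= t <= T)%N by lia.
    pose b := Num.sqrt (cardS (S t) t + tau + 1)%:R : R.
    have b0 : 0 < b by rewrite sqrtr_gt0 ltr0n; lia.
    have st0 : 0 < Num.sqrt (t%:R : R) by rewrite sqrtr_gt0 ltr0n; lia.
    have bt : Num.sqrt (t%:R : R) <= b.
      by rewrite ler_sqrt ?ler0n // ler_nat; have := F2 t ht'; rewrite /k; lia.
    have ec : cc t = r * G * a * (2 * b)^-1.
      rewrite /cc /eta sqrtrM; last exact: ler0n.
      rewrite -/q -/a -/b.
      have et : (tau%:R : R) = (a ^+ 2 - 1) / 2.
        by rewrite a2 /q natrD natrM; field.
      rewrite et; field.
      by rewrite !gt_eqF.
    rewrite ec; apply: ler_wpM2l.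
      by apply: mulr_ge0; [apply: mulr_ge0|]; lra.
    rewrite lef_pV2 ?posrE ?mulr_gt0 //.
    by rewrite ler_pM2l.
  rewrite -mulr_sumr.
  apply: le_trans (_ : r * G * a * Num.sqrt T%:R <= _).
    apply: ler_wpM2l; last exact: sum_inv_sqrt.
    by apply: mulr_ge0; [apply: mulr_ge0|]; lra.
  rewrite -mulrA; apply: ler_wpM2l; first by apply: mulr_ge0; lra.
  rewrite /a /Q' -sqrtrM; last exact: ltW.
  rewrite ler_sqrt; last exact: ltW.
  rewrite mulrC ler_pM2r // ler_nat; lia.
have sA : \sum_(1 <= t < T.+1) (dot (g t) (x t) - dot (g t) p) =
  \sum_(1 <= t < T.+1) dot (g t) (x t) - \sum_(1 <= t < T.+1) dot (g t) p by rewrite sumrB.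
have sC : \sum_(1 <= t < T.+1) (dot (g t) (x t) - cc t) =
  \sum_(1 <= t < T.+1) dot (g t) (x t) - \sum_(1 <= t < T.+1) cc t by rewrite sumrB.
rewrite sA in hreg; rewrite sC in main.
rewrite -/Q'.
lra.
Qed.
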